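(* Let $a\in[0,\infty)$ and let $\theta:[0,1]\to[0,\infty]$ and $\vartheta:[0,\infty]\to[0,1]$ be continuous and decreasing functions such that (1) $\theta(x)=\infty$ if and only if $x=0$; (2) $\theta(x)=\frac{a}{2}$ if and only if $x=1$; (3) $\vartheta(x)=1$ if and only if $x\in[0,a]$; (4) $\vartheta(x)=0$ if and only if $x=\infty$. Then the function $O_{\theta,\vartheta}:[0,1]^2\to[0,1]$ defined by $O_{\theta,\vartheta}(x,y)=\vartheta(\theta(x)+\theta(y))$ is an overlap function.
   Context: ''Decreasing'' means non-increasing and ''increasing'' means non-decreasing. Arithmetic in $[0,\infty]$ uses $c+\infty=\infty$; continuity on $[0,\infty]$ refers to the usual topology of the extended half-line. An overlap function is a map $O:[0,1]^2\to[0,1]$ that is (O1) commutative, (O2) $O(x,y)=0$ iff $xy=0$, (O3) $O(x,y)=1$ iff $xy=1$, (O4) increasing in each variable, (O5) continuous. *)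

(* Defs.v *)
From HB Require Import structures.
From mathcomp Require Import all_boot all_order all_algebra.
From mathcomp Require Import all_classical all_reals topology normedtype ereal.
Unset Strict Implicit. Unset Printing Implicit Defensive.
Import Order.TTheory GRing.Theory Num.Theory numFieldNormedType.Exports.
Local Open Scope classical_set_scope.
Local Open Scope ring_scope.

Definition unitI (R : realType) : set R := [set x : R | 0 <= x <= 1].

Definition unitSq (R : realType) : set (R * R) :=
  [set p : R * R | (0 <= p.1 <= 1) /\ (0 <= p.2 <= 1)].

Definition extHalf (R : realType) : set (\bar R) := [set x : \bar R | (0 <= x)%E].

(* Overlap function on [0,1]^2 (values of O outside [0,1]^2 are irrelevant). *)
Definition is_overlap (R : realType) (O : R -> R -> R) : Prop :=
  (forall x y, unitI R x -> unitI R y -> unitI R (O x y)) /\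
      (forall x y, unitI R x -> unitI R y -> O x y = O y x) /\
      (forall x y, unitI R x -> unitI R y -> (O x y = 0 <-> x * y = 0)) /\
      (forall x y, unitI R x -> unitI R y -> (O x y = 1 <-> x * y = 1)) /\
      (forall x y z, unitI R x -> unitI R y -> unitI R z -> y <= z ->
          O x y <= O x z /\ O y x <= O z x) /\
      {within unitSq R, continuous (fun p : R * R => O p.1 p.2)}.

(* Main.v *)
Require Import Defs.
From HB Require Import structures.
From mathcomp Require Import all_boot all_order all_algebra.
From mathcomp Require Import all_classical all_reals topology normedtype ereal.
From mathcomp Require Import lra.
Import Order.TTheory GRing.Theory Num.Theory numFieldNormedType.Exports.
Local Open Scope classical_set_scope.
Local Open Scope ring_scope.

Lemma within_fst (R : realType) (p : R * R) :
  fst @ within (unitSq R) (nbhs p) --> within (unitI R) (nbhs p.1).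
Proof.
move=> B /= HB.
have H : nbhs p (fun q : R * R => unitI R q.1 -> B q.1).
  exact: (@cvg_fst R R (nbhs p.1) (nbhs p.2) (nbhs_filter _) _ HB).
change (nbhs p (fun q => unitSq R q -> B q.1)).
apply: (@filterS _ _ (nbhs_filter p) _ _ _ H).
move=> q Hq [H1 H2]; exact: Hq.
Qed.
Lemma within_snd (R : realType) (p : R * R) :
  snd @ within (unitSq R) (nbhs p) --> within (unitI R) (nbhs p.2).
Proof.
move=> B /= HB.
have H : nbhs p (fun q : R * R => unitI R q.2 -> B q.2).
  exact: (@cvg_snd R R (nbhs p.1) (nbhs p.2) (nbhs_filter _) _ HB).
change (nbhs p (fun q => unitSq R q -> B q.2)).
apply: (@filterS _ _ (nbhs_filter p) _ _ _ H).
move=> q Hq [H1 H2]; exact: Hq.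
Qed.

Lemma ereal_sum_half (R : realType) (a : R) (u v : \bar R) :
  ((a/2)%:E <= u)%E -> ((a/2)%:E <= v)%E -> (u + v <= a%:E)%E ->
  u = (a/2)%:E /\ v = (a/2)%:E.
Proof.
case: u => [r| |] ; case: v => [s| |] //=; rewrite ?lee_fin //.
move=> h1 h2 h3; split; congr EFin; lra.
Qed.

Lemma ereal_sum_oo (R : realType) (u v : \bar R) :
  (0 <= u)%E -> (0 <= v)%E -> (u + v = +oo <-> u = +oo \/ v = +oo)%E.
Proof.
case: u => [r| |] ; case: v => [s| |] //=; split => //; try by [left|right].
by case.
Qed.

Theorem theorem3p2 (R : realType) (a : R) (theta : R -> \bar R) (vt : \bar R -> R) :
  0 <= a ->
  (* theta : [0,1] -> [0,+oo], continuous, decreasing *)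
  (forall x, unitI R x -> extHalf R (theta x)) ->
  {within unitI R, continuous theta} ->
  (forall x y, unitI R x -> unitI R y -> x <= y -> (theta y <= theta x)%E) ->
  (* vt : [0,+oo] -> [0,1], continuous, decreasing *)
  (forall x, extHalf R x -> unitI R (vt x)) ->
  {within extHalf R, continuous vt} ->
  (forall x y, extHalf R x -> extHalf R y -> (x <= y)%E -> vt y <= vt x) ->
  (* (1) *) (forall x, unitI R x -> (theta x = +oo%E <-> x = 0)) ->
  (* (2) *) (forall x, unitI R x -> (theta x = ((a / 2)%:E) <-> x = 1)) ->
  (* (3) *) (forall x, extHalf R x -> (vt x = 1 <-> (x <= a%:E)%E)) ->
  (* (4) *) (forall x, extHalf R x -> (vt x = 0 <-> x = +oo%E)) ->
  is_overlap R (fun x y => vt (theta x + theta y)%E).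
Proof.
move=> a0 th0 thc thd vt01 vtc vtd h1 h2 h3 h4.
have I1 : unitI R 1 by rewrite /unitI /= ler01 lexx.
have sum0 : forall x y, unitI R x -> unitI R y -> extHalf R (theta x + theta y)%E.
  by move=> x y hx hy; apply: adde_ge0; [exact: th0|exact: th0].
have thge : forall x, unitI R x -> ((a/2)%:E <= theta x)%E.
  move=> x hx; rewrite -(proj2 (h2 1 I1) erefl); apply: thd => //.
  by case/andP: hx.
split; [|split; [|split; [|split; [|split]]]].
- by move=> x y hx hy; apply: vt01; apply: sum0.
- by move=> x y hx hy; rewrite addeC.
- move=> x y hx hy; rewrite (h4 _ (sum0 _ _ hx hy)).
  rewrite (@ereal_sum_oo R _ _ (th0 _ hx) (th0 _ hy)) (h1 _ hx) (h1 _ hy).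
  split => [[]->|]; [by rewrite mul0r | by rewrite mulr0 |].
  by move/eqP; rewrite mulf_eq0 => /orP[]/eqP->; [left|right].
- move=> x y hx hy; rewrite (h3 _ (sum0 _ _ hx hy)).
  split.
    move=> /(@ereal_sum_half R a _ _ (thge _ hx) (thge _ hy)) [] /(h2 _ hx) -> /(h2 _ hy) ->.
    by rewrite mulr1.
  move=> hxy.
  have [x1 y1] : x = 1 /\ y = 1.
    move: hx hy => /andP[hx0 hx1] /andP[hy0 hy1]; split; nra.
  by rewrite x1 y1 (proj2 (h2 1 I1) erefl) -EFinD; rewrite lee_fin; lra.
- move=> x y z hx hy hz yz; split; (apply: vtd; [apply: sum0|apply: sum0|]) => //.
    by apply: leeD2l; apply: thd.
  by apply: leeD => //; apply: thd.
- apply/subspace_continuousP => p Hp.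
  set G := within (unitSq R) (nbhs p).
  have FG : Filter G by apply: within_filter.
  have c1 : (fun q => theta q.1) @ G --> theta p.1.
    apply: (cvg_comp fst theta (@within_fst R p)).
    by move/subspace_continuousP: thc; apply; case: Hp.
  have c2 : (fun q => theta q.2) @ G --> theta p.2.
    apply: (cvg_comp snd theta (@within_snd R p)).
    by move/subspace_continuousP: thc; apply; case: Hp.
  have c3 : (fun q => theta q.1 + theta q.2)%E @ G --> (theta p.1 + theta p.2)%E.
    apply: cvgeD => //; apply: ge0_adde_def; rewrite inE; apply: th0; by case: Hp.
  have c4 : (fun q => theta q.1 + theta q.2)%E @ G -->
            within (extHalf R) (nbhs (theta p.1 + theta p.2)%E).
    move=> B /= HB.
    have HG : G (fun q => extHalf R (theta q.1 + theta q.2)%E).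
      rewrite /G /within /=; apply: nearW => q [] qa qb; exact: sum0.
    have HB' := c3 _ HB.
    exact: (filterS2 _ _ HB' HG).
  apply: (cvg_comp _ vt c4).
  move/subspace_continuousP: vtc; apply; case: Hp => ? ?; exact: sum0.
Qed.
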